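(* Let $\mu\colon X^3\to X$ be a coarse median on a metric space $(X,d)$ with parameters $k,h$, and let $L\ge0$. Then there exist $\beta,\gamma\ge0$, depending only on $L$, $k$ and $h$, such that for every $\mathrm{CAT}(0)$ cube complex $C$ and every $L$-quasi-morphism $f\colon(C^{(0)},\mu_{C^{(0)}})\to(X,\mu)$ the following hold. (i) For any two parallel edges $e_1,e_2$ of $C$ with endpoints $e_i^\pm$, we have $\frac1\beta d(f(e_1^+),f(e_1^-))-\gamma\le d(f(e_2^+),f(e_2^-))\le\beta\,d(f(e_1^+),f(e_1^-))+\gamma$. (ii) If $x_0,\dots,x_m\in C^{(0)}$ is a combinatorial geodesic in the $1$-skeleton $C^{(1)}$, then $d(f(x_i),f(x_{i+1}))\le\beta\,d(f(x_0),f(x_m))+\gamma$ for all $i\in\{0,\dots,m-1\}$.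
   Context: $\mu_{C^{(0)}}$ is the median operation on the vertex set $C^{(0)}$ given by the median of the path metric on the $1$-skeleton. Two edges of $C$ are parallel if they cross the same hyperplane (wall). A map $\phi\colon S\to X$ between sets with ternary operations $\mu_S,\mu_X$ is an $L$-quasi-morphism if $d(\phi(\mu_S(s_1,s_2,s_3)),\mu_X(\phi(s_1),\phi(s_2),\phi(s_3)))\le L$ for all $s_i$. A finite median algebra is identified with the vertex set of a finite $\mathrm{CAT}(0)$ cube complex with its median operation. A coarse median on $(X,d)$ with parameters $k\ge0$ and non-decreasing $h\colon\mathbb{N}\to\mathbb{R}_{\ge0}$ is $\mu\colon X^3\to X$ such that (i) $d(\mu(x,y,z),\mu(x',y',z'))\le k(d(x,x')+d(y,y')+d(z,z'))+h(0)$ for all points; (ii) for every finite non-empty $A\subseteq X$ there are a finite median algebra $M$, an $h(|A|)$-quasi-morphism $\lambda\colon M\to X$ and $\pi\colon A\to M$ with $d(a,\lambda(\pi(a)))\le h(|A|)$ for $a\in A$. *)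

(* Defs.v *)
From Stdlib Require Import Reals Lia List.
Open Scope R_scope.

Definition is_metric {X : Type} (d : X -> X -> R) : Prop :=
  (forall x y, 0 <= d x y) /\
  (forall x y, d x y = 0 <-> x = y) /\
  (forall x y, d x y = d y x) /\
  (forall x y z, d x z <= d x y + d y z).

Definition is_median_algebra {M : Type} (m : M -> M -> M -> M) : Prop :=
  (forall a b c, m a b c = m b a c) /\
  (forall a b c, m a b c = m a c b) /\
  (forall a b, m a a b = a) /\
  (forall a b c d e, m a b (m c d e) = m (m a b c) (m a b d) e).

Definition finite_type (M : Type) : Prop := exists l : list M, forall x, In x l.

Definition quasi_morphism {S X : Type} (muS : S -> S -> S -> S)
  (d : X -> X -> R) (muX : X -> X -> X -> X) (phi : S -> X) (L : R) : Prop :=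
  forall s1 s2 s3, d (phi (muS s1 s2 s3)) (muX (phi s1) (phi s2) (phi s3)) <= L.

Definition coarse_median {X : Type} (d : X -> X -> R) (mu : X -> X -> X -> X)
  (k : R) (h : nat -> R) : Prop :=
  (forall x y z x' y' z',
     d (mu x y z) (mu x' y' z') <= k * (d x x' + d y y' + d z z') + h 0%nat) /\
  (forall A : list X, A <> nil -> NoDup A ->
     exists (M : Type) (muM : M -> M -> M -> M),
       finite_type M /\ is_median_algebra muM /\
       exists (lam : M -> X) (pi : {a : X | In a A} -> M),
         quasi_morphism muM d mu lam (h (length A)) /\
         forall a : {a : X | In a A}, d (proj1_sig a) (lam (pi a)) <= h (length A)).

Definition walk_len {V : Type} (adj : V -> V -> Prop) (u v : V) (n : nat) : Prop :=
  exists p : nat -> V, p 0%nat = u /\ p n = v /\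
    forall i, (i < n)%nat -> adj (p i) (p (S i)).

Definition gdist_is {V : Type} (adj : V -> V -> Prop) (u v : V) (n : nat) : Prop :=
  walk_len adj u v n /\ forall k, walk_len adj u v k -> (n <= k)%nat.

Definition between {V : Type} (adj : V -> V -> Prop) (x y z : V) : Prop :=
  exists a b, gdist_is adj x z a /\ gdist_is adj z y b /\ gdist_is adj x y (a + b).

Definition is_graph_median {V : Type} (adj : V -> V -> Prop) (x y z m : V) : Prop :=
  between adj x y m /\ between adj y z m /\ between adj x z m.

(** 1-skeleton of a CAT(0) cube complex = median graph (Chepoi, Roller):
    simple, connected, every triple has a unique median. *)
Definition cat0_cube_skeleton {V : Type} (adj : V -> V -> Prop) : Prop :=
  (forall u v, adj u v -> adj v u) /\
  (forall u, ~ adj u u) /\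
  (forall u v, exists n, walk_len adj u v n) /\
  (forall x y z, exists m, is_graph_median adj x y z m /\
     forall m', is_graph_median adj x y z m' -> m' = m).

(** halfspace of the hyperplane dual to the edge (u,v) containing u *)
Definition halfspace {V : Type} (adj : V -> V -> Prop) (u v : V) (x : V) : Prop :=
  exists a b, gdist_is adj x u a /\ gdist_is adj x v b /\ (a < b)%nat.

(** edges u1v1 and u2v2 cross the same hyperplane (same pair of halfspaces) *)
Definition parallel_edges {V : Type} (adj : V -> V -> Prop) (u1 v1 u2 v2 : V) : Prop :=
  adj u1 v1 /\ adj u2 v2 /\
  ((forall x, (halfspace adj u1 v1 x <-> halfspace adj u2 v2 x) /\
              (halfspace adj v1 u1 x <-> halfspace adj v2 u2 x)) \/
   (forall x, (halfspace adj u1 v1 x <-> halfspace adj v2 u2 x) /\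
              (halfspace adj v1 u1 x <-> halfspace adj u2 v2 x))).

Definition cube_quasi_morphism {V X : Type} (adj : V -> V -> Prop)
  (d : X -> X -> R) (mu : X -> X -> X -> X) (f : V -> X) (L : R) : Prop :=
  forall a b c m, is_graph_median adj a b c m ->
    d (f m) (mu (f a) (f b) (f c)) <= L.

Definition comb_geodesic {V : Type} (adj : V -> V -> Prop) (x : nat -> V) (m : nat) : Prop :=
  (forall i, (i < m)%nat -> adj (x i) (x (S i))) /\ gdist_is adj (x 0%nat) (x m) m.

(* Main.v *)
Require Import Defs.
From Stdlib Require Import Reals List Lra Lia Classical.
Open Scope R_scope.

Lemma walk_rev {V : Type} (adj : V -> V -> Prop) (Hs : forall u v, adj u v -> adj v u)
  u v n : walk_len adj u v n -> walk_len adj v u n.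
Proof.
  intros [p [H0 [Hn Hst]]]. exists (fun i => p (n - i)%nat).
  split; [rewrite Nat.sub_0_r; auto|]. split; [rewrite Nat.sub_diag; auto|].
  intros i Hi. apply Hs. replace (n - i)%nat with (S (n - S i)) by lia. apply Hst. lia.
Qed.

Lemma walk0 {V : Type} (adj : V -> V -> Prop) u v : walk_len adj u v 0 -> u = v.
Proof. intros [p [H0 [Hn _]]]. congruence. Qed.

Lemma walk_app {V : Type} (adj : V -> V -> Prop) u v w n m :
  walk_len adj u v n -> walk_len adj v w m -> walk_len adj u w (n + m).
Proof.
  intros [p [Hp0 [Hpn Hp]]] [q [Hq0 [Hqm Hq]]].
  exists (fun i => if Nat.leb i n then p i else q (i - n)%nat).
  split; [simpl; auto|].
  split.
  - destruct (Nat.leb_spec (n + m) n).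
    + assert (m = 0%nat) by lia. subst m. rewrite Nat.add_0_r. congruence.
    + replace (n + m - n)%nat with m by lia. auto.
  - intros i Hi. destruct (Nat.leb_spec i n); destruct (Nat.leb_spec (S i) n).
    + apply Hp. lia.
    + assert (i = n) by lia. subst i. rewrite Hpn. replace (S n - n)%nat with 1%nat by lia.
      rewrite <- Hq0. apply Hq. lia.
    + lia.
    + replace (S i - n)%nat with (S (i - n)) by lia. apply Hq. lia.
Qed.

Lemma gdist_sym {V : Type} (adj : V -> V -> Prop) (Hs : forall u v, adj u v -> adj v u)
  u v n : gdist_is adj u v n -> gdist_is adj v u n.
Proof.
  intros [W M]. split; [apply walk_rev; auto|]. intros k Hk. apply M. apply walk_rev; auto.
Qed.

Lemma gdist_refl {V : Type} (adj : V -> V -> Prop) u : gdist_is adj u u 0.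
Proof. split; [exists (fun _ => u); repeat split; intros; lia | intros; lia]. Qed.

Lemma gdist_adj {V : Type} (adj : V -> V -> Prop) (Hi : forall u, ~ adj u u) u v :
  adj u v -> gdist_is adj u v 1.
Proof.
  intros H. split.
  - exists (fun i => match i with 0%nat => u | _ => v end). repeat split.
    intros i Hi'. assert (i = 0%nat) by lia. subst. auto.
  - intros k Hk. destruct k; [|lia]. apply walk0 in Hk. subst. exfalso; eapply Hi; eauto.
Qed.

Lemma hs_self {V : Type} (adj : V -> V -> Prop) (Hi : forall u, ~ adj u u) u v :
  adj u v -> halfspace adj u v u.
Proof. intros H. exists 0%nat, 1%nat. split; [apply gdist_refl|split; [apply gdist_adj; auto|lia]]. Qed.

Lemma hs_median {V : Type} (adj : V -> V -> Prop) (Hs : forall u v, adj u v -> adj v u)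
  (Hi : forall u, ~ adj u u) a b c :
  adj a b -> halfspace adj a b c ->
  is_graph_median adj a b c a /\ is_graph_median adj b a c a.
Proof.
  intros Hab [p [q [Hca [Hcb Hpq]]]].
  assert (Hab1 : gdist_is adj a b 1) by (apply gdist_adj; auto).
  assert (Hba1 : gdist_is adj b a 1) by (apply gdist_adj; auto).
  assert (q <= p + 1)%nat.
  { apply (proj2 Hcb). apply walk_app with a. exact (proj1 Hca). exact (proj1 Hab1). }
  assert (q = S p) by lia. subst q.
  assert (Hac : gdist_is adj a c p) by (apply gdist_sym; auto).
  assert (Hbc : gdist_is adj b c (S p)) by (apply gdist_sym; auto).
  assert (B1 : between adj a b a) by (exists 0%nat, 1%nat; split; [apply gdist_refl|split; auto]).
  assert (B2 : between adj b c a) by (exists 1%nat, p; split; [auto|split; auto]).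
  assert (B3 : between adj a c a) by (exists 0%nat, p; split; [apply gdist_refl|split; auto]).
  assert (B4 : between adj b a a) by (exists 1%nat, 0%nat; split; [auto|split; [apply gdist_refl|auto]]).
  split; repeat split; auto.
Qed.

Lemma walk_seg {V : Type} (adj : V -> V -> Prop) (x : nat -> V) (m : nat) :
  (forall i, (i < m)%nat -> adj (x i) (x (S i))) ->
  forall i j, (i <= j)%nat -> (j <= m)%nat -> walk_len adj (x i) (x j) (j - i).
Proof.
  intros H i j Hij Hjm. exists (fun t => x (i + t)%nat).
  split; [rewrite Nat.add_0_r; auto|]. split; [f_equal; lia|].
  intros t Ht. replace (i + S t)%nat with (S (i + t)) by lia. apply H. lia.
Qed.

Lemma geo_median {V : Type} (adj : V -> V -> Prop) (Hs : forall u v, adj u v -> adj v u)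
  (x : nat -> V) (m : nat) : comb_geodesic adj x m ->
  forall j, (j <= m)%nat -> is_graph_median adj (x 0%nat) (x m) (x j) (x j).
Proof.
  intros [Hst [Wm Mm]] j Hj.
  assert (G1 : gdist_is adj (x 0%nat) (x j) j).
  { split. replace j with (j - 0)%nat at 2 by lia. apply walk_seg with m; auto; lia.
    intros k Hk. assert (m <= k + (m - j))%nat. apply Mm. apply walk_app with (x j); auto.
    apply walk_seg with m; auto; lia. lia. }
  assert (G2 : gdist_is adj (x j) (x m) (m - j)).
  { split. apply walk_seg with m; auto; lia.
    intros k Hk. assert (m <= j + k)%nat. apply Mm. apply walk_app with (x j); auto.
    apply G1. lia. }
  split; [|split].
  - exists j, (m - j)%nat. split; auto. split; auto. replace (j + (m - j))%nat with m by lia.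
    split; auto.
  - exists (m - j)%nat, 0%nat. split; [apply gdist_sym; auto|]. split; [apply gdist_refl|].
    rewrite Nat.add_0_r. apply gdist_sym; auto.
  - exists j, 0%nat. split; auto. split; [apply gdist_refl|]. rewrite Nat.add_0_r. auto.
Qed.

Lemma aac_generic {X M : Type} (d : X -> X -> R) (mu : X -> X -> X -> X) (k : R) (h0 H : R)
  (muM : M -> M -> M -> M) (lam : M -> X) (pa pc : M) (a c : X) :
  is_metric d -> 0 <= k ->
  (forall x y z x' y' z',
     d (mu x y z) (mu x' y' z') <= k * (d x x' + d y y' + d z z') + h0) ->
  muM pa pa pc = pa -> quasi_morphism muM d mu lam H ->
  d a (lam pa) <= H -> d c (lam pc) <= H ->
  d a (mu a a c) <= 2 * H + 3 * k * H + h0.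
Proof.
  intros [Hpos [Hz [Hsy Htr]]] Hk Hlip Hid Hqm Ha Hc.
  pose proof (Hqm pa pa pc) as Q. rewrite Hid in Q.
  pose proof (Hlip (lam pa) (lam pa) (lam pc) a a c) as Lp.
  rewrite (Hsy (lam pa) a), (Hsy (lam pc) c) in Lp.
  assert (k * (d a (lam pa) + d a (lam pa) + d c (lam pc)) <= k * (3 * H)).
  { apply Rmult_le_compat_l; lra. }
  pose proof (Htr a (lam pa) (mu a a c)).
  pose proof (Htr (lam pa) (mu (lam pa) (lam pa) (lam pc)) (mu a a c)).
  lra.
Qed.

Lemma aac {X : Type} (d : X -> X -> R) (mu : X -> X -> X -> X) (k : R) (h : nat -> R) :
  is_metric d -> coarse_median d mu k h -> 0 <= k ->
  (forall n m : nat, (n <= m)%nat -> h n <= h m) ->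
  forall a c, d a (mu a a c) <= 2 * h 2%nat + 3 * k * h 2%nat + h 0%nat.
Proof.
  intros Hm [Hlip Hcm] Hk Hmono a c.
  destruct (classic (a = c)) as [E|NE].
  - subst c.
    destruct (Hcm (a :: nil)) as [M [muM [_ [Hmed [lam [pi [Hqm Happ]]]]]]].
    + discriminate.
    + constructor; [simpl; tauto | constructor].
    + destruct Hmed as [_ [_ [Hid _]]].
      set (sa := exist (fun x => In x (a :: nil)) a (or_introl eq_refl)).
      pose proof (Happ sa) as Ha. simpl in Ha.
      pose proof (aac_generic d mu k (h 0%nat) (h 1%nat) muM lam (pi sa) (pi sa) a a Hm Hk
        Hlip (Hid _ _) Hqm Ha Ha).
      assert (h 1%nat <= h 2%nat) by (apply Hmono; lia).
      assert (k * h 1%nat <= k * h 2%nat) by (apply Rmult_le_compat_l; lra).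
      lra.
  - destruct (Hcm (a :: c :: nil)) as [M [muM [_ [Hmed [lam [pi [Hqm Happ]]]]]]].
    + discriminate.
    + constructor; [simpl; intros [H|[]]; auto | constructor; [simpl; tauto | constructor]].
    + destruct Hmed as [_ [_ [Hid _]]].
      set (sa := exist (fun x => In x (a :: c :: nil)) a (or_introl eq_refl)).
      set (sc := exist (fun x => In x (a :: c :: nil)) c (or_intror (or_introl eq_refl))).
      pose proof (Happ sa) as Ha. pose proof (Happ sc) as Hc. simpl in Ha, Hc.
      exact (aac_generic d mu k (h 0%nat) (h 2%nat) muM lam (pi sa) (pi sc) a c Hm Hk
        Hlip (Hid _ _) Hqm Ha Hc).
Qed.

Lemma near_a {X : Type} (d : X -> X -> R) (mu : X -> X -> X -> X) (k : R) (h : nat -> R) :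
  is_metric d -> coarse_median d mu k h -> 0 <= k ->
  (forall n m : nat, (n <= m)%nat -> h n <= h m) ->
  forall a b c, d (mu a b c) a <= k * d b a + h 0%nat +
     (2 * h 2%nat + 3 * k * h 2%nat + h 0%nat).
Proof.
  intros Hm Hc Hk Hmono a b c.
  pose proof (aac d mu k h Hm Hc Hk Hmono a c).
  destruct Hm as [Hpos [Hz [Hsy Htr]]].
  pose proof ((proj1 Hc) a b c a a c) as Lp.
  assert (d a a = 0) by (apply Hz; auto). assert (d c c = 0) by (apply Hz; auto).
  pose proof (Htr (mu a b c) (mu a a c) a). rewrite (Hsy (mu a a c) a) in *.
  replace (k * (d a a + d b a + d c c)) with (k * d b a) in Lp by (rewrite H0, H1; ring).
  lra.
Qed.

Theorem lemma6p1 :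
  forall (k : R) (h : nat -> R) (L : R),
    0 <= k ->
    (forall n, 0 <= h n) ->
    (forall n m : nat, (n <= m)%nat -> h n <= h m) ->
    0 <= L ->
    exists beta gamma : R, 0 < beta /\ 0 <= gamma /\
      forall (X : Type) (d : X -> X -> R) (mu : X -> X -> X -> X),
        is_metric d -> coarse_median d mu k h ->
        forall (V : Type) (adj : V -> V -> Prop),
          cat0_cube_skeleton adj ->
          forall f : V -> X, cube_quasi_morphism adj d mu f L ->
            (forall e1p e1m e2p e2m : V,
               parallel_edges adj e1p e1m e2p e2m ->
               (1 / beta) * d (f e1p) (f e1m) - gamma <= d (f e2p) (f e2m) /\
               d (f e2p) (f e2m) <= beta * d (f e1p) (f e1m) + gamma) /\
            (forall (x : nat -> V) (m : nat),
               comb_geodesic adj x m ->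
               forall i : nat, (i < m)%nat ->
                 d (f (x i)) (f (x (S i))) <= beta * d (f (x 0%nat)) (f (x m)) + gamma).
Proof.
  intros k h L Hk Hh Hmono HL.
  set (c0 := 2 * h 2%nat + 3 * k * h 2%nat + h 0%nat).
  assert (Hc0 : 0 <= c0).
  { unfold c0. pose proof (Hh 2%nat). pose proof (Hh 0%nat).
    assert (0 <= k * h 2%nat) by (apply Rmult_le_pos; auto). lra. }
  exists (2 * k + 1), (2 * L + 2 * h 0%nat + 2 * c0).
  pose proof (Hh 0%nat) as Hh0.
  split; [lra|]. split; [lra|].
  intros X d mu Hm Hcm V adj [Hs [Hi _]] f Hqm.
  pose proof Hm as [Hpos [Hz [Hsy Htr]]].
  assert (Core : forall u1 v1 u2 v2, adj u1 v1 -> halfspace adj u1 v1 u2 ->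
            halfspace adj v1 u1 v2 ->
            d (f u1) (f v1) <= k * d (f u2) (f v2) + 2 * L + h 0%nat).
  { intros u1 v1 u2 v2 Ha H1 H2.
    pose proof (Hqm _ _ _ _ (proj1 (hs_median adj Hs Hi u1 v1 u2 Ha H1))) as Q1.
    pose proof (Hqm _ _ _ _ (proj2 (hs_median adj Hs Hi v1 u1 v2 (Hs _ _ Ha) H2))) as Q2.
    pose proof ((proj1 Hcm) (f u1) (f v1) (f u2) (f u1) (f v1) (f v2)) as Lp.
    assert (d (f u1) (f u1) = 0) by (apply Hz; auto).
    assert (d (f v1) (f v1) = 0) by (apply Hz; auto).
    rewrite H, H0 in Lp.
    pose proof (Htr (f u1) (mu (f u1) (f v1) (f u2)) (f v1)) as T1.
    pose proof (Htr (mu (f u1) (f v1) (f u2)) (mu (f u1) (f v1) (f v2)) (f v1)) as T2.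
    rewrite (Hsy (mu (f u1) (f v1) (f v2)) (f v1)) in T2.
    lra. }
  split.
  - intros u1 v1 u2 v2 [Ha1 [Ha2 Hc]].
    assert (Hb : d (f u1) (f v1) <= k * d (f u2) (f v2) + 2 * L + h 0%nat /\
                 d (f u2) (f v2) <= k * d (f u1) (f v1) + 2 * L + h 0%nat).
    { destruct Hc as [Hc|Hc].
      - split.
        + apply Core; auto.
          * apply (proj1 (Hc u2)). apply hs_self; auto.
          * apply (proj2 (Hc v2)). apply hs_self; auto.
        + apply Core; auto.
          * apply (proj1 (Hc u1)). apply hs_self; auto.
          * apply (proj2 (Hc v1)). apply hs_self; auto.
      - rewrite (Hsy (f u2) (f v2)). split.
        + apply Core; auto.
          * apply (proj1 (Hc v2)). apply hs_self; auto.
          * apply (proj2 (Hc u2)). apply hs_self; auto.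
        + apply Core; auto.
          * apply (proj1 (Hc u1)). apply hs_self; auto.
          * apply (proj2 (Hc v1)). apply hs_self; auto. }
    destruct Hb as [Hb1 Hb2].
    pose proof (Hpos (f u1) (f v1)). pose proof (Hpos (f u2) (f v2)).
    set (t := 1 / (2 * k + 1)).
    assert (Ht : t * (2 * k + 1) = 1) by (unfold t; field; lra).
    assert (Ht0 : 0 < t) by (unfold t; apply Rdiv_lt_0_compat; lra).
    split; nra.
  - intros x m Hg i Him.
    pose proof (near_a d mu k h Hm Hcm Hk Hmono) as Nr. fold c0 in Nr.
    assert (Bj : forall j, (j <= m)%nat ->
       d (f (x j)) (f (x 0%nat)) <= L + k * d (f (x 0%nat)) (f (x m)) + h 0%nat + c0).
    { intros j Hj. pose proof (Hqm _ _ _ _ (geo_median adj Hs x m Hg j Hj)) as Q.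
      pose proof (Nr (f (x 0%nat)) (f (x m)) (f (x j))).
      rewrite (Hsy (f (x m)) (f (x 0%nat))) in H.
      pose proof (Htr (f (x j)) (mu (f (x 0%nat)) (f (x m)) (f (x j))) (f (x 0%nat))).
      lra. }
    pose proof (Bj i ltac:(lia)). pose proof (Bj (S i) ltac:(lia)).
    pose proof (Htr (f (x i)) (f (x 0%nat)) (f (x (S i)))).
    rewrite (Hsy (f (x 0%nat)) (f (x (S i)))) in H1.
    pose proof (Hpos (f (x 0%nat)) (f (x m))).
    nra.
Qed.
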